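(* Let $X$ be a $k$-regular distance regular graph of diameter $d$, let $Y=\mathrm{LD}(X)$, and let $Y_i$ be the $i$-th distance digraph of $Y$. Let $\lambda$ be an eigenvalue of $A(X)$ with $\lambda\neq\pm k$, let $E_\lambda$ be the orthogonal projection onto the $\lambda$-eigenspace of $A(X)$, and set $S_\lambda := D_t^TE_\lambda D_h - D_h^TE_\lambda D_t$. Then \[S_\lambda\in\mathrm{span}\{S(Y_1),S(Y_2),\dots,S(Y_d)\}.\]
   Context: $X$ is a connected distance regular graph (for vertices $u,v$ at distance $\ell$, the number of vertices at distance $i$ from $u$ and $j$ from $v$ depends only on $i,j,\ell$). Each edge $\{a,b\}$ of $X$ is replaced by arcs $(a,b)$ and $(b,a)$; the line digraph $\mathrm{LD}(X)$ has the arcs as vertices, with an arc from $(a,b)$ to $(c,d)$ iff $b=c$. For a digraph $Y$, its $i$-th distance digraph $Y_i$ has the same vertex set, with $a$ adjacent to $b$ iff the directed distance from $a$ to $b$ in $Y$ is $i$. For a digraph $Z$ with $01$-adjacency matrix $A(Z)$, its skew-adjacency matrix is $S(Z)=A(Z)-A(Z)^T$. $D_t$ and $D_h$ have rows indexed by vertices and columns by arcs: $(D_t)_{u,(a,b)}=1$ iff $u=a$, $(D_h)_{u,(a,b)}=1$ iff $u=b$, and $0$ otherwise. *)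

(* Defs.v *)
From HB Require Import structures.
From mathcomp Require Import all_boot all_order all_algebra.
From mathcomp Require Import reals.
Set Implicit Arguments. Unset Strict Implicit. Unset Printing Implicit Defensive.
Import Order.TTheory GRing.Theory Num.Theory.
Local Open Scope ring_scope.

Definition walkb (T : finType) (e : rel T) (n : nat) (x y : T) : bool :=
  [exists p : n.-tuple T, path e x p && (last x p == y)].

Definition dist_is (T : finType) (e : rel T) (x y : T) (n : nat) : bool :=
  walkb e n x y && [forall m : 'I_n, ~~ walkb e m x y].

Definition simple_graph (T : finType) (e : rel T) : Prop :=
  symmetric e /\ irreflexive e.

Definition connected_graph (T : finType) (e : rel T) : Prop :=
  forall x y, connect e x y.

Definition regular_graph (T : finType) (e : rel T) (k : nat) : Prop :=
  forall x, #|[set y | e x y]| = k.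

Definition diameter_is (T : finType) (e : rel T) (d : nat) : Prop :=
  (forall x y, exists2 n, (n <= d)%N & dist_is e x y n) /\
  (exists x y, dist_is e x y d).

(* distance regular: the intersection numbers p^l_{ij} are well defined *)
Definition distance_regular (T : finType) (e : rel T) : Prop :=
  forall (l i j : nat) (u v u' v' : T),
    dist_is e u v l -> dist_is e u' v' l ->
    #|[set w | dist_is e u w i && dist_is e v w j]| =
    #|[set w | dist_is e u' w i && dist_is e v' w j]|.

Definition arc_pred (T : finType) (e : rel T) : pred (T * T) :=
  fun p => e p.1 p.2.

Definition arc (T : finType) (e : rel T) : finType := {p : T * T | arc_pred e p}.

Definition ld_rel (T : finType) (e : rel T) : rel (arc e) :=
  fun a b => (val a).2 == (val b).1.

Definition adjmx (R : nzRingType) (V : finType) (r : rel V) : 'M[R]_#|V| :=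
  \matrix_(i, j) (r (enum_val i) (enum_val j))%:R.

Definition skew_adjmx (R : nzRingType) (V : finType) (r : rel V) : 'M[R]_#|V| :=
  adjmx R r - (adjmx R r)^T.

Definition dist_digraph (V : finType) (r : rel V) (i : nat) : rel V :=
  fun a b => dist_is r a b i.

Definition Dt (R : nzRingType) (T : finType) (e : rel T) : 'M[R]_(#|T|, #|arc e|) :=
  \matrix_(i, j) (enum_val i == (val (enum_val j)).1)%:R.

Definition Dh (R : nzRingType) (T : finType) (e : rel T) : 'M[R]_(#|T|, #|arc e|) :=
  \matrix_(i, j) (enum_val i == (val (enum_val j)).2)%:R.

Definition orth_proj (R : fieldType) (n : nat) (E U : 'M[R]_n) : Prop :=
  E^T = E /\ E *m E = E /\ (E :=: U)%MS.

(* Main.v *)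
Require Import Defs.
From HB Require Import structures.
From mathcomp Require Import all_boot all_order all_algebra.
From mathcomp Require Import reals.
Import Order.TTheory GRing.Theory Num.Theory.
Local Open Scope ring_scope.
Set Implicit Arguments. Unset Strict Implicit.

Section Walks.
Variables (T : finType) (e : rel T).

Lemma walkb0 x y : walkb e 0 x y = (x == y).
Proof.
apply/existsP/idP => [[p]|/eqP <-].
  by rewrite (tuple0 p) /= => /eqP ->.
by exists [tuple]; rewrite /= eqxx.
Qed.

Lemma walkbS n x y : walkb e n.+1 x y = [exists z, e x z && walkb e n z y].
Proof.
apply/existsP/existsP => [[p]|[z /andP[exz /existsP[s Hs]]]].
  case/tupleP: p => z s /= /andP[/andP[exz ps] ls].
  by exists z; rewrite exz; apply/existsP; exists s; rewrite ps.
by exists [tuple of z :: s]; rewrite /= exz.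
Qed.

Lemma dist_uniq x y n m : dist_is e x y n -> dist_is e x y m -> n = m.
Proof.
move=> /andP[wn /forallP fn] /andP[wm /forallP fm].
case: (ltngtP n m) => // H.
  by move: (fm (Ordinal H)); rewrite wn.
by move: (fn (Ordinal H)); rewrite wm.
Qed.

Lemma dist0 x y : dist_is e x y 0 = (x == y).
Proof.
rewrite /dist_is walkb0; case: (x == y) => //=.
by apply/forallP => -[].
Qed.

Lemma dist1 x y : irreflexive e -> dist_is e x y 1 = e x y.
Proof.
move=> irr; rewrite /dist_is walkbS.
apply/andP/idP => [[/existsP[z /andP[exz]]]|exy].
  by rewrite walkb0 => /eqP <-.
split; first by apply/existsP; exists y; rewrite exy walkb0 eqxx.
apply/forallP => i; rewrite (ord1 i) /= walkb0; apply/eqP => exy'.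
by rewrite exy' irr in exy.
Qed.

End Walks.

Section Dst.
Variables (T : finType) (e : rel T) (d : nat).
Hypothesis Hd : forall x y : T, exists2 n, (n <= d)%N & dist_is e x y n.

Definition dst (x y : T) : nat :=
  if [pick n : 'I_d.+1 | dist_is e x y n] is Some n then nat_of_ord n else 0%N.

Lemma dst_spec x y : dist_is e x y (dst x y).
Proof.
rewrite /dst; case: pickP => [n //|H].
have [n nd Hn] := Hd x y.
by move: (H (Ordinal (nd : (n < d.+1)%N))); rewrite /= Hn.
Qed.

Lemma dst_le x y : (dst x y <= d)%N.
Proof.
rewrite /dst; case: pickP => [n _|//]; by rewrite -ltnS.
Qed.

Lemma distE x y n : dist_is e x y n = (n == dst x y).
Proof.
apply/idP/eqP => [H|->]; last exact: dst_spec.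
exact: dist_uniq H (dst_spec x y).
Qed.

Lemma dst0 x y : (dst x y == 0%N) = (x == y).
Proof. by rewrite -(dist0 e) distE eq_sym. Qed.

End Dst.

Section LD.
Variables (T : finType) (e : rel T) (d : nat).
Hypothesis Hd : forall x y : T, exists2 n, (n <= d)%N & dist_is e x y n.

Lemma walkb_ld n (p q : Defs.arc e) :
  walkb (@ld_rel T e) n.+1 p q = walkb e n (val p).2 (val q).1.
Proof.
elim: n p => [|n IH] p.
  rewrite walkbS walkb0; apply/existsP/eqP => [[r /andP[/eqP -> ]]|H].
    by rewrite walkb0 => /eqP ->.
  by exists q; rewrite walkb0 eqxx andbT /ld_rel H.
rewrite walkbS walkbS; apply/existsP/existsP => [[r /andP[/eqP pr]]|[z /andP[ez w]]].
  rewrite IH => w; exists (val r).2; rewrite w andbT pr.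
  by have := valP r.
have ar : arc_pred e ((val p).2, z) by [].
exists (Sub ((val p).2, z) ar : Defs.arc e); rewrite /ld_rel SubK /= eqxx /= IH SubK /=; exact: w.
Qed.

Definition dY (p q : Defs.arc e) : nat :=
  if p == q then 0%N else (dst e d (val p).2 (val q).1).+1.

Lemma distY p q n : dist_is (@ld_rel T e) p q n = (n == dY p q).
Proof.
suff H : dist_is (@ld_rel T e) p q (dY p q).
  apply/idP/eqP => [H'|->] //; exact: dist_uniq H' H.
rewrite /dY; case: eqP => [->|/eqP npq]; first by rewrite dist0.
apply/andP; split; first by rewrite walkb_ld; case/andP: (dst_spec Hd (val p).2 (val q).1).
apply/forallP => -[[|m] /= Hm]; first by rewrite walkb0.
rewrite walkb_ld; case/andP: (dst_spec Hd (val p).2 (val q).1) => _ /forallP.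
by move/(_ (Ordinal (Hm : (m < _)%N))).
Qed.

End LD.
Section LinAlg.
Variable R : realType.

Lemma mmT0 (n m : nat) (N : 'M[R]_(n,m)) : N *m N^T = 0 -> N = 0.
Proof.
move=> H; apply/matrixP => i j; rewrite mxE.
move/matrixP: H => /(_ i i); rewrite !mxE.
under eq_bigr do rewrite mxE -expr2.
move/eqP; rewrite psumr_eq0; last by move=> k _; exact: sqr_ge0.
by move/allP/(_ j (mem_index_enum _)); rewrite /= sqrf_eq0 => /eqP.
Qed.

Lemma symsq n (M B : 'M[R]_n) : B^T = B -> M *m B *m B = 0 -> M *m B = 0.
Proof.
move=> sB H; apply: mmT0.
by rewrite trmx_mul sB mulmxA H mul0mx.
Qed.

Lemma symsqn n (M B : 'M[R]_n.+1) m : B^T = B -> M *m (B ^+ m.+1) = 0 -> M *m B = 0.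
Proof.
move=> sB; elim: m M => [|m IH] M; first by rewrite expr1.
move=> H; apply: IH; rewrite exprSr -mulmxE mulmxA; apply: (symsq sB).
by rewrite !mulmxE -!mulrA -expr2 -exprD addn2 -mulmxE.
Qed.

Lemma horner_comm n (A : 'M[R]_n.+1) p : horner_mx A p * A = A * horner_mx A p.
Proof.
have : horner_mx A (p * 'X) = horner_mx A ('X * p) by rewrite mulrC.
by rewrite !rmorphM /= horner_mx_X.
Qed.

Lemma horner_comm2 n (A : 'M[R]_n.+1) p q :
  horner_mx A p * horner_mx A q = horner_mx A q * horner_mx A p.
Proof. by rewrite -!rmorphM mulrC. Qed.

Lemma horner_sym n (A : 'M[R]_n.+1) p : A^T = A -> (horner_mx A p)^T = horner_mx A p.
Proof.
move=> sA; elim/poly_ind: p => [|p c IH]; first by rewrite rmorph0 trmx0.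
rewrite rmorphD rmorphM /= horner_mx_X horner_mx_C linearD /= tr_scalar_mx.
by rewrite -mulmxE trmx_mul IH sA mulmxE -horner_comm.
Qed.

Lemma KL n (A E : 'M[R]_n) (lam : R) (P : 'M[R]_n -> Prop) :
  A^T = A -> E^T = E -> E *m E = E -> (E :=: eigenspace A lam)%MS ->
  (forall c, P c%:M) -> (forall M N, P M -> P N -> P (M + N)) ->
  (forall c M, P M -> P (c *: M)) -> (forall M, P M -> P (M *m A)) -> P E.
Proof.
case: n A E P => [|n] A E P sA sE EE HE Psc PD PZ PA.
  have -> : E = 0%:M by apply/matrixP => -[].
  exact: Psc.
have Phor : forall p, P (horner_mx A p).
  elim/poly_ind => [|p c IH].
    rewrite rmorph0 (_ : 0 = 0%:M); first exact: Psc.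
    by apply/matrixP => i j; rewrite !mxE mul0rn.
  rewrite rmorphD rmorphM /= horner_mx_X horner_mx_C -mulmxE.
  exact: PD (PA _ IH) (Psc c).
pose chi := char_poly A.
have chi0 : chi != 0 by apply: monic_neq0; exact: char_poly_monic.
have [m [q nq Dchi]] := multiplicity_XsubC chi lam.
rewrite chi0 /= in nq.
have : coprimep q ('X - lam%:P) by rewrite coprimep_XsubC.
case/Bezout_coprimepP => -[u v] /= /eqpP [[c1 c2] /= /andP[c1n0 c2n0] Hc].
pose B := A - lam%:M.
have HB : horner_mx A ('X - lam%:P) = B by rewrite rmorphB /= horner_mx_X horner_mx_C.
pose U := horner_mx A (u * q).
pose W := horner_mx A v.
have HU : c1 *: (U + W * B) = c2%:M.
  have := congr1 (horner_mx A) Hc.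
  rewrite !linearZ /= rmorphD rmorph1 /= /U /W -HB -rmorphM => ->; exact: scalemx1.
have sB : B^T = B by rewrite -HB horner_sym.
have EB : E *m B = 0.
  apply/sub_kermxP.
  have : (E <= eigenspace A lam)%MS by rewrite (HE.2 _ (eigenspace A lam)).1 submx_refl.
  by [].
pose Pm := (c1 / c2) *: U.
have EPm : E *m Pm = E.
  have H1 : E * (W * B) = 0 by rewrite -HB horner_comm2 HB mulrA -mulmxE EB mul0mx.
  have : E * (c1 *: (U + W * B)) = E * c2%:M by rewrite HU.
  rewrite -scalerAr mulrDr H1 addr0 -mulmxE mul_mx_scalar => H2.
  rewrite /Pm -scalemxAr mulmxE mulrC -scalerA -mulmxE H2 scalerA.
  by rewrite mulVf ?scale1r.
have PmB : Pm *m B = 0.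
  have H0 : U * B ^+ m = 0.
    rewrite -HB -rmorphXn -rmorphM -mulrA -Dchi /chi.
    by rewrite rmorphM /= (Cayley_Hamilton A) mulr0.
  have H0' : Pm *m B ^+ m = 0 by rewrite /Pm -scalemxAl mulmxE H0 scaler0.
  case: m {Dchi H0} H0' => [|m] H0'.
    by move: H0'; rewrite expr0 mulmx1 => ->; rewrite mul0mx.
  exact: symsqn sB H0'.
have PmE : Pm *m E = Pm.
  have : (Pm <= E)%MS.
    rewrite (HE.2 _ Pm).2; apply/sub_kermxP; exact: PmB.
  by case/submxP => X ->; rewrite -mulmxA EE.
have sPm : Pm^T = Pm by rewrite /Pm linearZ /= horner_sym.
have -> : E = Pm.
  by rewrite -EPm -[E *m Pm]trmxK trmx_mul sPm sE PmE sPm.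
exact: PZ (Phor _).
Qed.

End LinAlg.

Section DDsec.
Variables (R : realType) (T : finType) (e : rel T) (d : nat).
Hypothesis sym : symmetric e.
Hypothesis irr : irreflexive e.
Hypothesis Hd : forall x y : T, exists2 n, (n <= d)%N & dist_is e x y n.
Hypothesis DR : distance_regular e.

Lemma card_ev (Q : pred T) : \sum_(k < #|T|) (Q (enum_val k))%:R = #|[set w | Q w]|%:R :> R.
Proof.
have -> : \sum_(k < #|T|) (Q (enum_val k))%:R = \sum_w (Q w)%:R :> R.
  by rewrite (reindex (fun k : 'I_#|T| => enum_val k)) //=; exact: onW_bij (enum_val_bij T).
rewrite -natr_sum; congr (_%:R).
rewrite -sum1_card [RHS]big_mkcond /=; apply: eq_bigr => w _; rewrite inE; by case: (Q w).
Qed.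

Lemma sumpick (F : nat -> R) D : (D <= d)%N ->
  \sum_(m < d.+1) F m * (D == m)%:R = F D.
Proof.
move=> Dd; rewrite (bigD1 (Ordinal (Dd : (D < d.+1)%N))) //= eqxx mulr1 big1 ?addr0 //.
move=> m nm; have -> : (D == m) = false.
  by apply/negbTE; apply: contra nm => /eqP Dm; apply/eqP/val_inj; rewrite /= Dm.
by rewrite mulr0.
Qed.

Local Notation dst := (dst e d).

Definition DD (M : 'M[R]_#|T|) :=
  exists f : nat -> R, forall i j, M i j = f (dst (enum_val i) (enum_val j)).

Lemma DDsc c : DD c%:M.
Proof.
exists (fun n => if n == 0%N then c else 0) => i j.
rewrite mxE (dst0 Hd).
have -> : (enum_val i == enum_val j) = (i == j) by apply/eqP/eqP => [/enum_val_inj|->].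
by case: (i == j); rewrite ?mulr1n ?mulr0n.
Qed.

Lemma DDD M N : DD M -> DD N -> DD (M + N).
Proof. by move=> [f Hf] [g Hg]; exists (fun n => f n + g n) => i j; rewrite mxE Hf Hg. Qed.

Lemma DDZ c M : DD M -> DD (c *: M).
Proof. by move=> [f Hf]; exists (fun n => c * f n) => i j; rewrite mxE Hf. Qed.

Definition G (f : nat -> R) (u v : T) : R :=
  \sum_(m < d.+1) f m * #|[set w | dist_is e u w m && dist_is e v w 1]|%:R.

Lemma DDA M : DD M -> DD (M *m adjmx R e).
Proof.
move=> [f Hf].
pose g n := if [pick pr : T * T | dist_is e pr.1 pr.2 n] is Some pr then G f pr.1 pr.2 else 0.
exists g => i j; set x := enum_val i; set y := enum_val j.
have -> : g (dst x y) = G f x y.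
  rewrite /g; case: pickP => [pr Hpr|H]; last first.
    by move: (H (x, y)); rewrite /= dst_spec.
  apply: eq_bigr => m _; congr (_ * _%:R).
  exact: (@DR (dst x y) m 1%N _ _ _ _ Hpr (dst_spec Hd x y)).
rewrite mxE /G.
under eq_bigr => k _ do rewrite Hf mxE -(sumpick f (dst_le e d x (enum_val k))) mulr_suml.
rewrite exchange_big /=; apply: eq_bigr => m _.
under eq_bigr do rewrite -mulrA.
rewrite -mulr_sumr -card_ev; congr (_ * _); apply: eq_bigr => k _.
rewrite /= (distE Hd) dist1 // /y sym eq_sym -natrM.
by rewrite mulnb.
Qed.

End DDsec.

Lemma sum_ev (R : realType) (V : finType) (g : 'I_#|V| -> R) a :
  \sum_l (enum_val l == a)%:R * g l = g (enum_rank a).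
Proof.
rewrite (bigD1 (enum_rank a)) //= enum_rankK eqxx mul1r big1 ?addr0 // => l nl.
have -> : (enum_val l == a) = false.
  by apply/negbTE; apply: contra nl => /eqP <-; rewrite enum_valK.
by rewrite mul0r.
Qed.

Lemma sumh (R : realType) (c : nat -> R) d n :
  \sum_(1 <= i < d.+1) c i * (n == i)%:R = if (0 < n <= d)%N then c n else 0.
Proof.
elim: d => [|d IH]; first by rewrite big_geq //; case: n.
rewrite big_nat_recr //= IH.
case: (ltngtP n d.+1) => H.
- by rewrite ltnS in H; rewrite H mulr0 addr0.
- have H2 : (n <= d)%N = false by apply/negbTE; rewrite -ltnNge ltnW.
  by rewrite H2 andbF mulr0 addr0.
- by rewrite H ltnn andbF mulr1 add0r.
Qed.

Theorem lemma5p3 (R : realType) (T : finType) (e : rel T) (k d : nat)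
    (lambda : R) (E : 'M[R]_#|T|) :
  simple_graph e -> connected_graph e -> regular_graph e k ->
  distance_regular e -> diameter_is e d ->
  eigenvalue (adjmx R e) lambda ->
  lambda != k%:R -> lambda != - k%:R ->
  orth_proj E (eigenspace (adjmx R e) lambda) ->
  exists c : nat -> R,
    (Dt R e)^T *m E *m Dh R e - (Dh R e)^T *m E *m Dt R e =
    \sum_(1 <= i < d.+1) c i *: skew_adjmx R (dist_digraph (@ld_rel T e) i).
Proof.
move=> [sym irr] _ _ DR [Hd _] _ _ _ [sE [EE HE]].
have sA : (adjmx R e)^T = adjmx R e by apply/matrixP => i j; rewrite !mxE sym.
have [f Hf] : DD e d E.
  apply: (KL sA sE EE HE).
  - exact: DDsc.
  - exact: DDD.
  - exact: DDZ.
  - exact: DDA.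
exists (fun i => f d - f i.-1).
apply/matrixP => i j.
rewrite summxE !mxE.
set p := enum_val i; set q := enum_val j.
have L1 : forall (D1 D2 : 'M[R]_(#|T|, #|Defs.arc e|)) (a b : Defs.arc e -> T),
    (forall u w, D1 u w = (enum_val u == a (enum_val w))%:R) ->
    (forall u w, D2 u w = (enum_val u == b (enum_val w))%:R) ->
    \sum_j0 (D1^T *m E) i j0 * D2 j0 j = E (enum_rank (a p)) (enum_rank (b q)).
  move=> D1 D2 a b HD1 HD2.
  rewrite (eq_bigr (fun j0 => (enum_val j0 == b q)%:R * E (enum_rank (a p)) j0)).
    by rewrite sum_ev.
  move=> j0 _; rewrite HD2 mxE mulrC; congr (_ * _).
  rewrite (eq_bigr (fun l => (enum_val l == a p)%:R * E l j0)) ?sum_ev //.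
  by move=> l _; rewrite !mxE HD1.
rewrite (L1 _ _ (fun a => (val a).1) (fun a => (val a).2)); last 2 first.
  by move=> u w; rewrite mxE.
  by move=> u w; rewrite mxE.
rewrite (L1 _ _ (fun a => (val a).2) (fun a => (val a).1)); last 2 first.
  by move=> u w; rewrite mxE.
  by move=> u w; rewrite mxE.
have Es u v : E u v = E v u by rewrite -{1}sE mxE.
rewrite [E (enum_rank _) (enum_rank (val q).2)]Es !Hf !enum_rankK.
under eq_bigr => k0 _ do rewrite !mxE /dist_digraph !(distY Hd) mulrBr ![(k0 == _)]eq_sym.
rewrite sumrB !sumh -/p -/q /dY.
have hD D : (D <= d)%N -> (if (0 < D.+1 <= d)%N then f d - f D.+1.-1 else 0) = f d - f D.
  move=> Dd /=; case: ifP => // /negbT; rewrite -ltnNge => H.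
  have -> : D = d by apply/eqP; rewrite eqn_leq Dd.
  by rewrite subrr.
case: eqP => [<-|/eqP npq]; first by rewrite eqxx /= !subrr.
rewrite eq_sym (negbTE npq) !hD ?dst_le //.
by rewrite opprB [RHS]addrC [RHS]addrA subrK.
Qed.
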